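(* Let $\mathbf A\in\mathbb R^{m\times n}$ be a nonzero matrix with rank $r$ and nonzero singular values $\sigma_1(\mathbf A)\ge\cdots\ge\sigma_r(\mathbf A)>0$, and let $\mathbf b\in\mathbb R^m$ be arbitrary (the system $\mathbf A\mathbf x=\mathbf b$ may be consistent or inconsistent). Fix any row partition, any column partition, any step size $\alpha>0$, and any initial vector $\mathbf x^0\in\mathbb R^n$, and let $\mathbf x^k$ denote the $k$th iterate of the doubly stochastic block Gauss--Seidel (DSBGS) algorithm described in the context. Let $\mathbf x_\star$ be any solution of the normal equations $\mathbf A^T\mathbf A\mathbf x=\mathbf A^T\mathbf b$. Then for every $k\ge0$, $$\big\|\mathbb E[\mathbf A\mathbf x^k-\mathbf A\mathbf x_\star]\big\|_2\le\Big(\max_{1\le i\le r}\Big|1-\frac{\alpha\sigma_i^2(\mathbf A)}{\|\mathbf A\|_F^2}\Big|\Big)^k\|\mathbf A\mathbf x^0-\mathbf A\mathbf x_\star\|_2 .$$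
   Context: Notation: $\|\cdot\|_F$ the Frobenius norm, $\|\cdot\|_2$ the Euclidean norm. For $\mathcal I\subseteq[m]=\{1,\dots,m\}$ and $\mathcal J\subseteq[n]$, $\mathbf A_{\mathcal I,\mathcal J}$ is the submatrix of $\mathbf A$ with rows indexed by $\mathcal I$ and columns indexed by $\mathcal J$; $\mathbf I_{:,\mathcal J}$ denotes the columns of the identity matrix (of the appropriate order) indexed by $\mathcal J$. DSBGS algorithm: Let $\{\mathcal I_1,\dots,\mathcal I_s\}$ be a partition of $[m]$ into nonempty pairwise disjoint sets and $\{\mathcal J_1,\dots,\mathcal J_t\}$ a partition of $[n]$ into nonempty pairwise disjoint sets; let $\mathcal P=\{\mathcal I_1,\dots,\mathcal I_s\}\times\{\mathcal J_1,\dots,\mathcal J_t\}$. Given $\alpha>0$ and $\mathbf x^0\in\mathbb R^n$, for $k=1,2,\dots$: pick $(\mathcal I,\mathcal J)\in\mathcal P$ (independently of the previous choices) with probability $\|\mathbf A_{\mathcal I,\mathcal J}\|_F^2/\|\mathbf A\|_F^2$, and set $$\mathbf x^k=\mathbf x^{k-1}-\alpha\,\frac{\mathbf I_{:,\mathcal J}(\mathbf A_{\mathcal I,\mathcal J})^{T}(\mathbf I_{:,\mathcal I})^{T}}{\|\mathbf A_{\mathcal I,\mathcal J}\|_F^2}\,(\mathbf A\mathbf x^{k-1}-\mathbf b).$$ The expectation $\mathbb E$ is over the random choices of the blocks. *)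

(* Defs.v *)
From mathcomp Require Import all_boot all_order all_algebra.
Set Implicit Arguments. Unset Strict Implicit. Unset Printing Implicit Defensive.
Import Order.TTheory GRing.Theory Num.Theory.
Local Open Scope ring_scope.

Section DSBGS.
Variable R : rcfType.

Definition norm2 (k : nat) (v : 'cV[R]_k) : R :=
  Num.sqrt (\sum_(i < k) v i 0 ^+ 2).

Definition frob2 (m n : nat) (A : 'M[R]_(m, n)) : R :=
  \sum_(i < m) \sum_(j < n) A i j ^+ 2.

(* sigma : 'I_r -> R are the nonzero singular values of A, in nonincreasing
   order: A has a compact SVD  A = U diag(sigma) V^T  with U, V having
   orthonormal columns and sigma_1 >= ... >= sigma_r > 0 (hence rank A = r). *)
Definition singular_values (m n r : nat) (A : 'M[R]_(m, n)) (sigma : 'I_r -> R) : Prop :=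
  (forall i, 0 < sigma i) /\
  (forall i j : 'I_r, (i <= j)%N -> sigma j <= sigma i) /\
  exists (U : 'M[R]_(m, r)) (V : 'M[R]_(n, r)),
    U^T *m U = 1%:M /\ V^T *m V = 1%:M /\
    A = U *m diag_mx (\row_i sigma i) *m V^T.

(* Row partition {I_1..I_s} given by the labelling p : [m] -> [s]
   (I_a = p^{-1}(a)); column partition by q : [n] -> [t]. *)
Variables (m n s t : nat) (A : 'M[R]_(m, n)) (b : 'cV[R]_m)
  (p : 'I_m -> 'I_s) (q : 'I_n -> 'I_t) (alpha : R).

Definition blockF2 (a : 'I_s) (c : 'I_t) : R :=
  \sum_(i < m | p i == a) \sum_(j < n | q j == c) A i j ^+ 2.

(* I_{:,J} (A_{I,J})^T (I_{:,I})^T, an n x m matrix *)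
Definition blockT (a : 'I_s) (c : 'I_t) : 'M[R]_(n, m) :=
  \matrix_(j < n, i < m) (if (p i == a) && (q j == c) then A i j else 0).

Definition block_prob (ac : 'I_s * 'I_t) : R := blockF2 ac.1 ac.2 / frob2 A.

Definition dsbgs_step (x : 'cV[R]_n) (ac : 'I_s * 'I_t) : 'cV[R]_n :=
  x - (alpha / blockF2 ac.1 ac.2) *: (blockT ac.1 ac.2 *m (A *m x - b)).

Definition dsbgs_iter (x0 : 'cV[R]_n) (cs : seq ('I_s * 'I_t)) : 'cV[R]_n :=
  foldl dsbgs_step x0 cs.

Definition Exp (k : nat) (d : nat) (f : k.-tuple ('I_s * 'I_t) -> 'cV[R]_d) : 'cV[R]_d :=
  \sum_(c : k.-tuple ('I_s * 'I_t)) (\prod_(i < k) block_prob (tnth c i)) *: f c.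

End DSBGS.

(* Main.v *)
Require Import Defs.
From mathcomp Require Import all_boot all_order all_algebra ring.
Set Implicit Arguments. Unset Strict Implicit. Unset Printing Implicit Defensive.
Import Order.TTheory GRing.Theory Num.Theory.
Local Open Scope ring_scope.

Lemma tuple_sum_cons (V : nmodType) (T : finType) k (F : k.+1.-tuple T -> V) :
  \sum_(c : k.+1.-tuple T) F c = \sum_(x : T) \sum_(c : k.-tuple T) F [tuple of x :: c].
Proof.
rewrite pair_big /=.
rewrite (reindex (fun c : k.+1.-tuple T => (thead c, [tuple of behead c]))) /=.
  by apply: eq_bigr => c _; rewrite -tuple_eta.
exists (fun pr : T * k.-tuple T => [tuple of pr.1 :: pr.2]) => [c _|[x c] _] /=.
  by rewrite -tuple_eta.
by rewrite theadE; congr pair; apply: val_inj.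
Qed.

Section S.
Variable R : rcfType.
Variables (m n s t : nat) (A : 'M[R]_(m, n)) (b : 'cV[R]_m)
  (p : 'I_m -> 'I_s) (q : 'I_n -> 'I_t) (alpha : R).

Lemma blockT0 a c : blockF2 A p q a c = 0 -> blockT A p q a c = 0.
Proof.
move=> H; apply/matrixP => j i; rewrite !mxE.
case: ifP => // /andP[/eqP pa /eqP qc].
have H1 : \sum_(j0 < n | q j0 == c) A i j0 ^+ 2 = 0.
  apply: (psumr_eq0P _ H) => [k _|]; last by rewrite pa.
  by apply: sumr_ge0 => l _; exact: sqr_ge0.
have := psumr_eq0P (fun l _ => sqr_ge0 (A i l)) H1 (i:=j).
by rewrite qc eqxx => /(_ isT) /eqP; rewrite sqrf_eq0 => /eqP.
Qed.

Lemma sum_blockT : \sum_(ac : 'I_s * 'I_t) blockT A p q ac.1 ac.2 = A^T.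
Proof.
apply/matrixP => j i; rewrite summxE !mxE.
rewrite -(pair_big xpredT xpredT (fun a c => blockT A p q a c j i)) /=.
rewrite (bigD1 (p i)) //= [X in _ + X]big1 ?addr0; last first.
  by move=> a na; apply: big1 => c _; rewrite mxE eq_sym (negbTE na).
rewrite (bigD1 (q j)) //= [X in _ + X]big1 ?addr0; first by rewrite mxE !eqxx.
by move=> c nc; rewrite mxE eqxx eq_sym (negbTE nc).
Qed.

Lemma sum_blockF2 : \sum_(ac : 'I_s * 'I_t) blockF2 A p q ac.1 ac.2 = frob2 A.
Proof.
rewrite -(pair_big xpredT xpredT (fun a c => blockF2 A p q a c)) /= /frob2 /blockF2.
rewrite [RHS](partition_big p xpredT) //=; apply: eq_bigr => a _.
rewrite exchange_big /=; apply: eq_bigr => i _.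
by rewrite [RHS](partition_big q xpredT).
Qed.

Lemma sum_prob : frob2 A != 0 -> \sum_(ac : 'I_s * 'I_t) block_prob A p q ac = 1.
Proof.
move=> F0; rewrite /block_prob -mulr_suml sum_blockF2 divff //.
Qed.

Lemma one_step (xs x0 : 'cV[R]_n) : frob2 A != 0 ->
  A^T *m A *m xs = A^T *m b ->
  \sum_(ac : 'I_s * 'I_t) block_prob A p q ac *: (A *m dsbgs_step A b p q alpha x0 ac - A *m xs)
  = (1%:M - (alpha / frob2 A) *: (A *m A^T)) *m (A *m x0 - A *m xs).
Proof.
move=> F0 NE.
have E ac : block_prob A p q ac *: (A *m dsbgs_step A b p q alpha x0 ac - A *m xs)
   = block_prob A p q ac *: (A *m x0 - A *m xs)
     - (alpha / frob2 A) *: (A *m (blockT A p q ac.1 ac.2 *m (A *m x0 - b))).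
  rewrite /dsbgs_step mulmxBr -scalemxAr.
  rewrite addrAC scalerBr; congr (_ - _); rewrite scalerA /block_prob.
  have [E0|nz] := eqVneq (blockF2 A p q ac.1 ac.2) 0.
    by rewrite E0 blockT0 // ?mul0mx !(mul0mx, mulmx0, scaler0).
  have -> : blockF2 A p q ac.1 ac.2 / frob2 A * (alpha / blockF2 A p q ac.1 ac.2)
    = alpha / frob2 A by field; exact/andP.
  by [].
rewrite (eq_bigr _ (fun ac _ => E ac)) sumrB -scaler_suml sum_prob // scale1r.
rewrite -scaler_sumr -mulmx_sumr -mulmx_suml sum_blockT.
rewrite mulmxBl mul1mx; congr (_ - _).
rewrite -scalemxAl; congr (_ *: _).
rewrite mulmxBr -!mulmxA; congr (_ *m _).
by rewrite mulmxBr -NE !mulmxA.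
Qed.

Lemma Exp_cons k d (f : k.+1.-tuple ('I_s * 'I_t) -> 'cV[R]_d) :
  Exp A p q f = \sum_(x : 'I_s * 'I_t) block_prob A p q x *: Exp A p q (k := k) (fun c => f [tuple of x :: c]).
Proof.
rewrite /Exp tuple_sum_cons; apply: eq_bigr => x _; rewrite scaler_sumr.
apply: eq_bigr => c _; rewrite big_ord_recl tnth0 scalerA; congr (_ *: _).
congr (_ * _); apply: eq_bigr => i _; by rewrite tnthS.
Qed.

Lemma Exp0 d (f : 0.-tuple ('I_s * 'I_t) -> 'cV[R]_d) : Exp A p q f = f [tuple].
Proof.
rewrite /Exp (eq_bigl (pred1 [tuple])) ?big_pred1_eq ?big_ord0 ?scale1r //.
move=> c; apply/esym/eqP/val_inj; by case: c => -[].
Qed.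

Definition Tm := 1%:M - (alpha / frob2 A) *: (A *m A^T).
Definition Tk k := iter k (fun M => M *m Tm) (1%:M : 'M[R]_m).

Lemma main_rec (xs : 'cV[R]_n) : frob2 A != 0 ->
  A^T *m A *m xs = A^T *m b -> forall k (x0 : 'cV[R]_n),
  Exp A p q (k := k) (fun c => A *m dsbgs_iter A b p q alpha x0 c - A *m xs)
  = Tk k *m (A *m x0 - A *m xs).
Proof.
move=> F0 NE; elim=> [|k IH] x0; first by rewrite Exp0 /= mul1mx.
rewrite Exp_cons.
under eq_bigr => x _ do rewrite (IH (dsbgs_step A b p q alpha x0 x)) scalemxAr.
by rewrite -mulmx_sumr one_step // /= mulmxA.
Qed.



End S.

Section N.
Variable R : rcfType.

Definition sq k (v : 'cV[R]_k) := \sum_(i < k) v i 0 ^+ 2.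

Lemma sqE k (v : 'cV[R]_k) : sq v = (v^T *m v) 0 0.
Proof. by rewrite /sq mxE; apply: eq_bigr => i _; rewrite mxE expr2. Qed.

Lemma normU a k (U : 'M[R]_(a, k)) (y : 'cV[R]_k) : U^T *m U = 1%:M ->
  norm2 (U *m y) = norm2 y.
Proof.
move=> UU; rewrite /norm2 -!/(sq _) !sqE trmx_mul -mulmxA (mulmxA U^T) UU.
by rewrite mul1mx.
Qed.

Lemma pow_le (x y : R) k : 0 <= x <= y -> x ^+ k <= y ^+ k.
Proof.
move=> /andP[x0 xy]; elim: k => [|k IH]; first by rewrite !expr0.
rewrite !exprS; apply: ler_pM => //; exact: exprn_ge0.
Qed.

Lemma norm_diag k (d : 'rV[R]_k) (y : 'cV[R]_k) (rho : R) : 0 <= rho ->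
  (forall i, `|d 0 i| <= rho) -> norm2 (diag_mx d *m y) <= rho * norm2 y.
Proof.
move=> r0 hd; rewrite /norm2 -(ger0_norm r0) -sqrtr_sqr -sqrtrM ?sqr_ge0 //.
rewrite ler_wsqrtr // mulr_sumr; apply: ler_sum => i _.
rewrite mul_diag_mx mxE exprMn; apply: ler_wpM2r; first exact: sqr_ge0.
rewrite -real_normK ?num_real //.
by apply: pow_le; rewrite normr_ge0 /=.
Qed.

End N.

Theorem theorem2 (R : rcfType) (m n r s t : nat) (A : 'M[R]_(m, n)) (b : 'cV[R]_m)
  (sigma : 'I_r -> R)
  (p : 'I_m -> 'I_s) (q : 'I_n -> 'I_t) (alpha : R) (x0 xs : 'cV[R]_n) :
  A != 0 ->
  singular_values A sigma ->
  (forall a : 'I_s, exists i, p i = a) ->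
  (forall c : 'I_t, exists j, q j = c) ->
  0 < alpha ->
  A^T *m A *m xs = A^T *m b ->
  forall k : nat,
    norm2 (Exp A p q (k := k)
             (fun c : k.-tuple _ => A *m dsbgs_iter A b p q alpha x0 c - A *m xs))
    <= (\big[Num.max/0]_(i < r) `|1 - alpha * sigma i ^+ 2 / frob2 A|) ^+ k
       * norm2 (A *m x0 - A *m xs).
Proof.
move=> Anz [sp [smono [U [V [UU [VV AE]]]]]] _ _ ap NE k.
have F0 : frob2 A != 0.
  apply: contraNneq Anz => F0; apply/eqP/matrixP => i j; rewrite mxE.
  have H1 := psumr_eq0P (fun i _ => sumr_ge0 _ (fun j _ => sqr_ge0 (A i j))) F0 (i := i) isT.
  have := psumr_eq0P (fun j _ => sqr_ge0 (A i j)) H1 (i := j) isT.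
  by move/eqP; rewrite sqrf_eq0 => /eqP.
rewrite main_rec //.
set e := fun i => 1 - alpha * sigma i ^+ 2 / frob2 A.
set w := diag_mx (\row_i sigma i) *m V^T *m (x0 - xs).
have Av : A *m x0 - A *m xs = U *m w by rewrite -mulmxBr AE /w !mulmxA.
have TU : Tm A alpha *m U = U *m diag_mx (\row_i e i).
  rewrite /Tm mulmxBl mul1mx -scalemxAl.
  have -> : A *m A^T *m U = U *m diag_mx (\row_i (sigma i ^+ 2)).
    rewrite AE !trmx_mul trmxK tr_diag_mx !mulmxA -!(mulmxA _ V^T) VV mulmx1.
    rewrite -!(mulmxA _ U^T) UU mulmx1 -mulmxA mulmx_diag; congr (_ *m diag_mx _).
    by apply/rowP => i; rewrite !mxE expr2.
  rewrite scalemxAr -{1}(mulmx1 U) -mulmxBr; congr (_ *m _).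
  apply/matrixP => i j; rewrite !mxE; have [->|ne] := eqVneq i j; rewrite /e.
    by rewrite !mulr1n mulrAC.
  by rewrite /= !mulr0n mulr0 subr0.
have TkU : forall k, Tk A alpha k *m U = U *m diag_mx (\row_i e i ^+ k).
  elim=> [|j IH] /=.
    rewrite mul1mx -{1}(mulmx1 U); congr (_ *m _); apply/matrixP => i l; rewrite !mxE expr0; by case: (i == l).
  rewrite -mulmxA TU mulmxA IH -mulmxA mulmx_diag; congr (_ *m diag_mx _).
  by apply/rowP => i; rewrite !mxE exprSr.
rewrite Av mulmxA TkU -mulmxA !(normU _ UU).
apply: norm_diag.
  by apply: exprn_ge0; elim/big_ind: _ => // x y hx hy; rewrite le_max hx.
move=> i; rewrite mxE normrX; apply: pow_le; rewrite normr_ge0 /=.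
exact: (le_bigmax 0 (fun i => `|e i|) i).
Qed.
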